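(* For any $d_x\in\mathbb N$ and any $\alpha\in(0,0.5)$, there exists a $\textsc{ReLU}$ network $f:\mathbb R^{d_x}\rightarrow\mathbb R^{d_x}$ of width $d_x+1$ such that $f(x)=(1,\dots,1)$ for all $x\in\mathbb R^{d_x}\setminus[0,1]^{d_x}$, $f(x)=x$ for all $x\in[\alpha,1-\alpha]^{d_x}$, and $f(\mathbb R^{d_x})\subset[0,1]^{d_x}$.
   Context: A $\textsc{ReLU}$ network is $t_L\circ\sigma_{L-1}\circ\cdots\circ\sigma_1\circ t_1$ with affine $t_\ell:\mathbb R^{d_{\ell-1}}\to\mathbb R^{d_\ell}$ and coordinatewise $\textsc{ReLU}$ $\sigma_\ell(x)=\max\{x,0\}$; its width is $\max\{d_1,\dots,d_{L-1}\}$. *)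

(* Defs.v *)
From HB Require Import structures.
From mathcomp Require Import all_boot all_order all_algebra.
From mathcomp Require Import reals.
Set Implicit Arguments. Unset Strict Implicit. Unset Printing Implicit Defensive.
Import Order.TTheory GRing.Theory Num.Theory.
Local Open Scope ring_scope.

Definition relu {R : realType} {n : nat} (x : 'cV[R]_n) : 'cV[R]_n :=
  map_mx (fun a => Num.max a 0) x.

(* A ReLU network  t_L o sigma_{L-1} o ... o sigma_1 o t_1  from R^m to R^n,
   with affine maps t_l(x) = A x + b.
   - [Affine A b]      : the network consisting of a single affine map (L = 1).
   - [Layer A b N]     : first the affine map t_1(x) = A x + b into R^k,
                         then ReLU, then the network N : R^k -> R^n. *)
Inductive relu_net (R : realType) : nat -> nat -> Type :=
| Affine (m n : nat) : 'M[R]_(n, m) -> 'cV[R]_n -> relu_net R m n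
| Layer (m k n : nat) : 'M[R]_(k, m) -> 'cV[R]_k -> relu_net R k n -> relu_net R m n.

Fixpoint net_eval {R : realType} {m n : nat} (N : relu_net R m n) : 'cV[R]_m -> 'cV[R]_n :=
  match N in relu_net _ m n return 'cV[R]_m -> 'cV[R]_n with
  | Affine _ _ A b => fun x => A *m x + b
  | Layer _ _ _ A b N' => fun x => net_eval N' (relu (A *m x + b))
  end.

Fixpoint net_width {R : realType} {m n : nat} (N : relu_net R m n) : nat :=
  match N with
  | Affine _ _ _ _ => 0%N
  | Layer _ k _ _ _ N' => maxn k (net_width N')
  end.

Definition in_cube {R : realType} {d : nat} (a b : R) (x : 'cV[R]_d) : Prop :=
  forall i : 'I_d, a <= x i 0 <= b.

(* Main.v *)
Require Import Defs.
From HB Require Import structures.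
From mathcomp Require Import all_boot all_order all_algebra.
From mathcomp Require Import reals.
From mathcomp Require Import ring lra.
Import Order.TTheory GRing.Theory Num.Theory.
Local Open Scope ring_scope.

Lemma relu_col (R : realType) (m n : nat) (u : 'cV[R]_m) (w : 'cV[R]_n) :
  relu (col_mx u w) = col_mx (relu u) (relu w).
Proof. by rewrite /relu map_col_mx. Qed.

Lemma relu_scal (R : realType) (c : R) :
  relu (c%:M : 'cV[R]_1) = (Num.max c 0)%:M.
Proof.
apply/matrixP => i j; rewrite !ord1 !mxE /=.
by rewrite !mulr1n.
Qed.

Lemma relu_id (R : realType) (m : nat) (u : 'cV[R]_m) :
  (forall i, 0 <= u i 0) -> relu u = u.
Proof.
move=> H; apply/matrixP => i j; rewrite !ord1 !mxE.
by apply/max_idPl; apply: H.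
Qed.

Lemma delta_mul (R : realType) (d : nat) (e : R) (j : 'I_d) (v : 'cV[R]_d) :
  (e *: (delta_mx 0 j : 'M[R]_(1, d))) *m v = (e * v j 0)%:M.
Proof.
rewrite -scalemxAl -rowE; apply/matrixP => i k; rewrite !ord1 !mxE /=.
by rewrite mulr1n.
Qed.

Lemma scal_mul (R : realType) (a c : R) :
  (a%:M : 'M[R]_1) *m (c%:M : 'cV[R]_1) = (a * c)%:M.
Proof. by rewrite scalar_mxM. Qed.

Lemma scalD (R : realType) (a c : R) :
  ((a + c)%:M : 'M[R]_1) = a%:M + c%:M.
Proof. by rewrite raddfD. Qed.

Definition fstep {R : realType} {n : nat} (s : 'cV[R]_n) (Ab : 'M[R]_n * 'cV[R]_n) :=
  relu (Ab.1 *m s + Ab.2).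

Lemma block_eval (R : realType) (d : nat) (P : 'M[R]_d) (Q : 'M[R]_(d,1)) (Rr : 'M[R]_(1, d)) (S : 'M[R]_1)
   (bv : 'cV[R]_d) (r : R) (v : 'cV[R]_d) (c : R) :
  fstep (col_mx v c%:M) (block_mx P Q Rr S, col_mx bv r%:M) =
  col_mx (relu (P *m v + Q *m c%:M + bv)) (relu (Rr *m v + S *m c%:M + r%:M)).
Proof. by rewrite /fstep /= mul_block_col add_col_mx relu_col. Qed.

Definition low {R : realType} {d : nat} (a : R) (j : 'I_d) : 'M[R]_(d + 1) * 'cV[R]_(d + 1) :=
  (block_mx 1%:M 0 (a *: delta_mx 0 j) (2 * a)%:M, col_mx 0 (1 - 2 * a)%:M).
Definition high {R : realType} {d : nat} (a : R) (j : 'I_d) : 'M[R]_(d + 1) * 'cV[R]_(d + 1) :=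
  (block_mx 1%:M 0 ((- a) *: delta_mx 0 j) (2 * a)%:M, col_mx 0 (1 + a)%:M).

Lemma low_eval (R : realType) (d : nat) (a : R) (j : 'I_d) (v : 'cV[R]_d) (c : R) :
  (forall i, 0 <= v i 0) ->
  fstep (col_mx v c%:M) (low a j) = col_mx v (Num.max (a * v j 0 + 2 * a * c + (1 - 2 * a)) 0)%:M.
Proof.
move=> Hv; rewrite block_eval mul1mx mul0mx !addr0 relu_id // delta_mul scal_mul.
by rewrite -!scalD relu_scal.
Qed.

Lemma high_eval (R : realType) (d : nat) (a : R) (j : 'I_d) (v : 'cV[R]_d) (c : R) :
  (forall i, 0 <= v i 0) ->
  fstep (col_mx v c%:M) (high a j) = col_mx v (Num.max ((- a) * v j 0 + 2 * a * c + (1 + a)) 0)%:M.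
Proof.
move=> Hv; rewrite block_eval mul1mx mul0mx !addr0 relu_id // delta_mul scal_mul.
by rewrite -!scalD relu_scal.
Qed.
Lemma num_step (R : realType) (a al v c : R) :
  0 < a -> 0 < al -> a * al = 1 -> 0 <= v <= 3 -> 0 <= c ->
  let c1 := Num.max (a * v + 2 * a * c + (1 - 2 * a)) 0 in
  let c2 := Num.max ((- a) * v + 2 * a * c1 + (1 + a)) 0 in
  [/\ 0 <= c2, (c = 0 -> 1 + al <= v <= 2 - al -> c2 = 0)
    & ((1 <= c) || (v < 1) || (2 < v) -> 1 <= c2)].
Proof.
move=> a0 al0 aal /andP[v0 v3] c0 c1 c2.
have c10 : 0 <= c1 by rewrite le_max lexx orbT.
split.
- by rewrite le_max lexx orbT.
- move=> ce /andP[h1 h2].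
  have e1 : c1 = 0.
    rewrite /c1 ce; apply/max_idPr; rewrite mulr0 addr0.
    have : a * v <= a * (2 - al) by rewrite ler_pM2l.
    lra.
  rewrite /c2 e1; apply/max_idPr; rewrite mulr0 addr0.
  have : a * (1 + al) <= a * v by rewrite ler_pM2l.
  lra.
- move=> H.
  have key : (1 <= c1) || (v < 1).
    case/orP: H => [/orP [H|H]|H].
    + rewrite /c1 le_max; apply/orP; left; apply/orP; left.
      have : 0 <= a * v by apply: mulr_ge0; lra.
      have : a * 1 <= a * c by rewrite ler_pM2l.
      lra.
    + by rewrite H orbT.
    + rewrite /c1 le_max; apply/orP; left; apply/orP; left.
      have : a * 2 <= a * v by rewrite ler_pM2l; lra.
      have : 0 <= a * c by apply: mulr_ge0; lra.
      lra.
  rewrite /c2 le_max; apply/orP; left.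
  case/orP: key => H1.
  + have : a * 1 <= a * c1 by rewrite ler_pM2l.
    have : a * v <= a * 3 by rewrite ler_pM2l.
    lra.
  + have : a * v <= a * 1 by rewrite ler_pM2l; lra.
    have : 0 <= a * c1 by apply: mulr_ge0; lra.
    lra.
Qed.

Definition accl {R : realType} {d : nat} (a : R) (js : seq 'I_d) :=
  flatten [seq [:: low a j; high a j] | j <- js].

Lemma acc_phase (R : realType) (d : nat) (al : R) (js : seq 'I_d) (v : 'cV[R]_d) :
  0 < al -> (forall i, 0 <= v i 0 <= 3) -> forall c, 0 <= c ->
  exists c', [/\ foldl fstep (col_mx v c%:M) (accl al^-1 js) = col_mx v c'%:M,
    0 <= c',
    (c = 0 -> all (fun j => (1 + al <= v j 0) && (v j 0 <= 2 - al)) js -> c' = 0)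
  & ((1 <= c) || has (fun j => (v j 0 < 1) || (2 < v j 0)) js -> 1 <= c')].
Proof.
move=> al0 Hv.
have Hv0 : forall i, 0 <= v i 0 by move=> i; case/andP: (Hv i).
have a0 : 0 < al^-1 by rewrite invr_gt0.
have aal : al^-1 * al = 1 by rewrite mulVf // gt_eqF.
elim: js => [|j js IH] c c0.
  exists c; split => //=; last by rewrite orbF.
move: (@num_step R _ _ _ _ a0 al0 aal (Hv j) c0) => /= [h0 h1 h2].
set c2 := Num.max _ 0 in h0 h1 h2.
have [c' [e0 e1 e2 e3]] := IH c2 h0.
exists c'; split => //.
- by rewrite /accl /= low_eval // high_eval.
- move=> ce /= /andP[hj hall]; apply: e2 => //; exact: h1.
- move=> H; apply: e3; move: H => /=.
  case/orP => [H|/orP[H|H]].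
  + by rewrite h2 // H.
  + rewrite h2 //; case/orP: H => ->; by rewrite ?orbT.
  + by rewrite H orbT.
Qed.

Definition L1 {R : realType} {d : nat} : 'M[R]_(d + 1, d) := col_mx 1%:M 0.
Definition b1 {R : realType} {d : nat} : 'cV[R]_(d + 1) := col_mx (const_mx 1) (0 : R)%:M.
Definition L2 {R : realType} {d : nat} : 'M[R]_(d + 1) * 'cV[R]_(d + 1) :=
  (block_mx (-1%:M) 0 0 0, col_mx (const_mx 3) (0 : R)%:M).
Definition Lw {R : realType} {d : nat} : 'M[R]_(d + 1) * 'cV[R]_(d + 1) :=
  (block_mx 1%:M (const_mx (-2)) 0 0, col_mx (const_mx (-1)) (0 : R)%:M).
Definition Lz {R : realType} {d : nat} : 'M[R]_(d + 1) * 'cV[R]_(d + 1) :=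
  (block_mx (-1%:M) 0 0 0, col_mx (const_mx 1) (0 : R)%:M).
Definition Out {R : realType} {d : nat} : 'M[R]_(d, d + 1) := row_mx 1%:M 0.

Fixpoint build {R : realType} {d : nat} (ls : seq ('M[R]_(d + 1) * 'cV[R]_(d + 1))) :
  relu_net R (d + 1) d :=
  match ls with
  | [::] => Affine Out 0
  | Ab :: ls' => Layer Ab.1 Ab.2 (build ls')
  end.

Lemma build_eval (R : realType) (d : nat) (ls : seq ('M[R]_(d + 1) * 'cV[R]_(d + 1))) s :
  net_eval (build ls) s = Out *m foldl fstep s ls + 0.
Proof. by elim: ls s => [|Ab ls IH] s //=; rewrite IH. Qed.

Lemma build_width (R : realType) (d : nat) (ls : seq ('M[R]_(d + 1) * 'cV[R]_(d + 1))) :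
  (net_width (build ls) <= d + 1)%N.
Proof. by elim: ls => [|Ab ls IH] //=; rewrite geq_max leqnn IH. Qed.

Lemma relu0 (R : realType) : relu ((0 : R)%:M : 'cV[R]_1) = (0 : R)%:M.
Proof. by rewrite relu_scal maxxx. Qed.

Lemma L1_eval (R : realType) (d : nat) (x : 'cV[R]_d) :
  relu (L1 *m x + b1) = col_mx (relu (x + const_mx 1)) (0 : R)%:M.
Proof. by rewrite /L1 /b1 mul_col_mx add_col_mx relu_col mul1mx mul0mx add0r relu0. Qed.

Lemma L2_eval (R : realType) (d : nat) (u : 'cV[R]_d) :
  fstep (col_mx u (0 : R)%:M) L2 = col_mx (relu (- u + const_mx 3)) (0 : R)%:M.
Proof. by rewrite block_eval !mul0mx !addr0 add0r relu0 mulNmx mul1mx. Qed.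

Lemma Lw_eval (R : realType) (d : nat) (v : 'cV[R]_d) (c : R) :
  fstep (col_mx v c%:M) Lw = col_mx (relu (v + c *: const_mx (-2) + const_mx (-1))) (0 : R)%:M.
Proof. by rewrite block_eval !mul0mx !addr0 add0r relu0 mul1mx mul_mx_scalar. Qed.

Lemma Lz_eval (R : realType) (d : nat) (v : 'cV[R]_d) :
  fstep (col_mx v (0 : R)%:M) Lz = col_mx (relu (- v + const_mx 1)) (0 : R)%:M.
Proof. by rewrite block_eval !mul0mx !addr0 add0r relu0 mulNmx mul1mx. Qed.

Lemma Out_eval (R : realType) (d : nat) (v : 'cV[R]_d) (c : 'cV[R]_1) :
  Out *m col_mx v c + 0 = v.
Proof. by rewrite /Out mul_row_col mul1mx mul0mx !addr0. Qed.

Lemma maxc (R : realType) (a : R) :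
  (Num.max a 0 = a /\ 0 <= a) \/ (Num.max a 0 = 0 /\ a < 0).
Proof. case: (ltP a 0) => h; [right|left]; split => //. Qed.

Lemma numv (R : realType) (al x : R) :
  [/\ 0 <= Num.max (- Num.max (x + 1) 0 + 3) 0 <= 3,
      (1 <= Num.max (- Num.max (x + 1) 0 + 3) 0 <= 2 -> 0 <= x <= 1)
    & (al <= x <= 1 - al -> 0 < al -> Num.max (- Num.max (x + 1) 0 + 3) 0 = 2 - x)].
Proof.
case: (@maxc R (- Num.max (x + 1) 0 + 3)) => [[-> h2]|[-> h2]];
case: (@maxc R (x + 1)) => [[e h1]|[e h1]]; rewrite e in h2 *;
split; try (apply/andP; split); try lra;
  try (move=> /andP[] *; lra); try (move=> /andP[] *; apply/andP; split; lra).
Qed.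

Lemma numy (R : realType) (v c : R) :
  [/\ 0 <= Num.max (- Num.max (v + c * -2 + -1) 0 + 1) 0 <= 1,
      (0 <= v <= 3 -> 1 <= c -> Num.max (- Num.max (v + c * -2 + -1) 0 + 1) 0 = 1)
    & (c = 0 -> 1 <= v <= 2 -> Num.max (- Num.max (v + c * -2 + -1) 0 + 1) 0 = 2 - v)].
Proof.
case: (@maxc R (- Num.max (v + c * -2 + -1) 0 + 1)) => [[-> h2]|[-> h2]];
case: (@maxc R (v + c * -2 + -1)) => [[e h1]|[e h1]]; rewrite e in h2 *;
split; try (apply/andP; split); try lra;
  try (move=> /andP[] *; lra); try (move=> ce /andP[] *; rewrite ce in h1 h2 *; lra).
Qed.

Theorem lemma12 (R : realType) (dx : nat) (alpha : R) :
  0 < alpha -> alpha < 1 / 2 ->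
  exists N : relu_net R dx dx,
    [/\ net_width N = dx.+1,
        (forall x : 'cV[R]_dx, ~ in_cube 0 1 x -> net_eval N x = const_mx 1),
        (forall x : 'cV[R]_dx, in_cube alpha (1 - alpha) x -> net_eval N x = x)
      & (forall x : 'cV[R]_dx, in_cube 0 1 (net_eval N x))].
Proof.
move=> al0 alh.
pose N := Layer L1 b1 (build (L2 :: accl alpha^-1 (enum 'I_dx) ++ [:: Lw; Lz])).
have Nev : forall x : 'cV[R]_dx, exists c',
  [/\ net_eval N x = relu (- relu (relu (- relu (x + const_mx 1) + const_mx 3)
          + c' *: const_mx (-2) + const_mx (-1)) + const_mx 1),
    0 <= c',
    (all (fun j => (1 + alpha <= relu (- relu (x + const_mx 1) + const_mx 3) j 0) &&
       (relu (- relu (x + const_mx 1) + const_mx 3) j 0 <= 2 - alpha)) (enum 'I_dx) -> c' = 0)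
  & (has (fun j => (relu (- relu (x + const_mx 1) + const_mx 3) j 0 < 1) ||
       (2 < relu (- relu (x + const_mx 1) + const_mx 3) j 0)) (enum 'I_dx) -> 1 <= c')].
  move=> x.
  set v := relu (- relu (x + const_mx 1) + const_mx 3).
  have Hv : forall i, 0 <= v i 0 <= 3.
    move=> i; rewrite !mxE; apply/andP; split; first by rewrite le_max lexx orbT.
    rewrite ge_max; apply/andP; split; last by lra.
    have : 0 <= Num.max (x i 0 + 1) 0 by rewrite le_max lexx orbT.
    lra.
  have [c' [e0 e1 e2 e3]] := @acc_phase R dx alpha (enum 'I_dx) v al0 Hv 0 (lexx 0).
  exists c'; split => //.
  - have fc : forall s a (l : seq ('M[R]_(dx + 1) * 'cV[R]_(dx + 1))),
      foldl fstep s (a :: l) = foldl fstep (fstep s a) l by [].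
    rewrite /N; change (net_eval (build (L2 :: accl alpha^-1 (enum 'I_dx) ++ [:: Lw; Lz]))
      (relu (L1 *m x + b1)) = relu (- relu (v + c' *: const_mx (-2) + const_mx (-1)) + const_mx 1)).
    rewrite L1_eval build_eval fc L2_eval foldl_cat e0 fc Lw_eval fc Lz_eval.
    by rewrite Out_eval.
  - by move=> H; apply: e2.
  - by move=> H; apply: e3; rewrite H orbT.
exists N; split.
- rewrite /N /= (maxn_idPl (build_width _ _ _)) maxnn; by rewrite addn1.
- move=> x Hx; have [c' [-> c0 h2 h3]] := Nev x.
  have c1 : 1 <= c'.
    apply: h3; apply/negPn/negP => /hasPn hn.
    apply: Hx => i; have := hn i (mem_enum _ i).
    rewrite !mxE negb_or -!leNgt => /andP[a b].
    by case: (@numv R 0 (x i 0)) => _ H _; apply: H; rewrite a b.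
  apply/matrixP => i j; rewrite ord1 !mxE.
  case: (@numy R (Num.max (- Num.max (x i 0 + 1) 0 + 3) 0) c') => _ H _; apply: H => //.
  by case: (@numv R 0 (x i 0)).
- move=> x Hx; have [c' [-> c0 h2 h3]] := Nev x.
  have ce : c' = 0.
    apply: h2; apply/allP => i _; rewrite !mxE.
    have hx := Hx i.
    case: (@numv R alpha (x i 0)) => _ _ -> //; move: hx => /andP[u w]; apply/andP; split; lra.
  apply/matrixP => i j; rewrite ord1 !mxE.
  have hx := Hx i.
  case: (@numv R alpha (x i 0)) => _ _ -> //.
  case: (@numy R (2 - x i 0) c') => _ _ -> //; first lra.
  move: hx => /andP[u w]; apply/andP; split; lra.
- move=> x i; have [c' [-> _ _ _]] := Nev x; rewrite !mxE.
  by case: (@numy R (Num.max (- Num.max (x i 0 + 1) 0 + 3) 0) c').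
Qed.
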